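(* Let $s,t:\mathbb R\to(0,\infty)$ and real sequences $\{a_k\}_k$, $\{b_k\}_k$ satisfy \[ a_{k+1}\le\Big(1-\frac{1}{s(b_k)}\Big)a_k+\frac1{t(b_k)}\quad\text{for all }k. \] Assume: (1) there is an interval $I=(\iota,\infty)$ such that $s$ and $t$ are continuously differentiable on $I$, $s(x)>1$ for all $x\in I$, and $\kappa:=s/t$ is non-increasing and convex on $I$; (2) $b_k\to\infty$, there is $\mathsf B$ with $b_{k+1}\le b_k+\mathsf B$ for all $k$ sufficiently large, and $\sum_{k=0}^\infty1/s(b_k)=\infty$; (3) there is $\beta\in(0,1)$ with $\mathsf B[s'(x)-\kappa(x)t'(x)]\ge-1+\beta$ for all $x\in I$. Then $\limsup_{k\to\infty}a_k/\kappa(b_k)<\infty$. *)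

(* Defs.v *)
From Stdlib Require Import Reals.
From Coquelicot Require Import Coquelicot.
Open Scope R_scope.

Definition kappa (s t : R -> R) (x : R) : R := s x / t x.

Definition C1_on_Ioi (iota : R) (f : R -> R) : Prop :=
  forall x, iota < x -> ex_derive f x /\ continuous (Derive f) x.

Definition nonincreasing_on_Ioi (iota : R) (f : R -> R) : Prop :=
  forall x y, iota < x -> x <= y -> f y <= f x.

Definition convex_on_Ioi (iota : R) (f : R -> R) : Prop :=
  forall x y l, iota < x -> iota < y -> 0 <= l <= 1 ->
    f (l * x + (1 - l) * y) <= l * f x + (1 - l) * f y.

(* Main.v *)
Require Import Defs.
From Stdlib Require Import Reals Lra Lia.
From Coquelicot Require Import Coquelicot.
Open Scope R_scope.

Lemma tangent (K : R -> R) iota x y d :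
  convex_on_Ioi iota K -> iota < x -> x < y -> is_derive K x d ->
  K x + d * (y - x) <= K y.
Proof.
  intros Hc Hx Hxy Hd. apply is_derive_Reals in Hd.
  destruct (Rle_or_lt (K x + d * (y - x)) (K y)) as [H|Hlt]; auto. exfalso.
  set (q := (K y - K x) / (y - x)).
  assert (Eq : K y - K x = q * (y - x)) by (unfold q; field; lra).
  assert (Hq : q < d).
  { destruct (Rlt_or_le q d) as [|H]; auto.
    assert (q * (y-x) >= d * (y - x)) by (apply Rle_ge, Rmult_le_compat_r; lra). lra. }
  destruct (Hd (d - q) ltac:(lra)) as [delta Hdel].
  set (h := Rmin (delta / 2) (y - x)).
  assert (Hd0 := cond_pos delta).
  assert (Hh1 : 0 < h) by (unfold h; apply Rmin_glb_lt; lra).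
  assert (Hh2 : h <= y - x) by (unfold h; apply Rmin_r).
  assert (Hh3 : h < delta) by (unfold h; pose proof (Rmin_l (delta/2) (y-x)); lra).
  specialize (Hdel h ltac:(lra) ltac:(rewrite Rabs_pos_eq; lra)).
  set (g := (K (x + h) - K x) / h) in Hdel.
  assert (Hg : q < g).
  { destruct (Rlt_or_le q g) as [|H]; auto.
    rewrite Rabs_left1 in Hdel; lra. }
  assert (Eg : K (x + h) - K x = g * h) by (unfold g; field; lra).
  set (l := 1 - h / (y - x)).
  assert (Hl : 0 <= l <= 1).
  { unfold l. split.
    - assert (h / (y - x) <= 1). { apply (Rmult_le_reg_r (y - x)); [lra|].
        unfold Rdiv; rewrite Rmult_assoc, Rinv_l; lra. } lra.
    - assert (0 <= h / (y - x)) by (apply Rle_mult_inv_pos; lra). lra. }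
  pose proof (Hc x y l Hx ltac:(lra) Hl) as Hcv.
  replace (l * x + (1 - l) * y) with (x + h) in Hcv by (unfold l; field; lra).
  replace (l * K x + (1 - l) * K y) with (K x + h * q) in Hcv
    by (unfold l; replace (K y) with (K x + q * (y - x)) by lra; field; lra).
  assert (g * h <= q * h) by lra.
  assert (g <= q) by (apply (Rmult_le_reg_r h); lra). lra.
Qed.

Lemma kappa_step (s t : R -> R) iota B beta x y :
  (forall x, 0 < s x) -> (forall x, 0 < t x) ->
  C1_on_Ioi iota s -> C1_on_Ioi iota t ->
  nonincreasing_on_Ioi iota (kappa s t) -> convex_on_Ioi iota (kappa s t) ->
  (forall x, iota < x -> B * (Derive s x - kappa s t x * Derive t x) >= -1 + beta) ->
  beta < 1 -> iota < x -> iota < y -> y <= x + B ->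
  kappa s t x * (1 - (1 - beta) / s x) <= kappa s t y.
Proof.
  intros Hs Ht Hs1 Ht1 Hni Hcv Hder Hb1 Hx Hy' Hy.
  assert (Hsx := Hs x). assert (Htx := Ht x).
  assert (HK : kappa s t x = s x / t x) by reflexivity.
  assert (HKp : 0 < kappa s t x) by (rewrite HK; apply Rdiv_lt_0_compat; auto).
  assert (Hb' : 0 <= (1 - beta) / s x) by (apply Rle_mult_inv_pos; lra).
  destruct (Rle_or_lt y x) as [Hyx|Hxy].
  - pose proof (Hni y x Hy' Hyx).
    assert (kappa s t x * ((1 - beta) / s x) >= 0) by (apply Rle_ge, Rmult_le_pos; lra).
    lra.
  - destruct (Hs1 x Hx) as [Hes _]. destruct (Ht1 x Hx) as [Het _].
    pose proof (is_derive_div s t x _ _ (Derive_correct _ _ Hes) (Derive_correct _ _ Het)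
       ltac:(lra)) as Hd.
    pose proof (tangent (kappa s t) iota x y _ Hcv Hx Hxy Hd) as Ht0.
    set (E := Derive s x - kappa s t x * Derive t x) in *.
    assert (HE := Hder x Hx). fold E in HE.
    replace ((Derive s x * t x - s x * Derive t x) / t x ^ 2) with (E / t x) in Ht0
      by (unfold E; rewrite HK; field; lra).
    assert (HDE : (y - x) * E >= -1 + beta).
    { destruct (Rle_or_lt 0 E).
      - assert (0 <= (y-x) * E) by (apply Rmult_le_pos; lra). lra.
      - assert (0 <= (B - (y - x)) * (- E)) by (apply Rmult_le_pos; lra). lra. }
    replace (kappa s t x * (1 - (1 - beta) / s x)) with (kappa s t x - (1 - beta) / t x)
      by (rewrite HK; field; lra).
    replace (E / t x * (y - x)) with (((y - x) * E) / t x) in Ht0 by (field; lra).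
    assert (((y - x) * E) / t x >= (-1 + beta) / t x).
    { apply Rle_ge. unfold Rdiv. apply Rmult_le_compat_r.
      - left; apply Rinv_0_lt_compat; lra.
      - lra. }
    replace ((-1 + beta) / t x) with (- ((1 - beta) / t x)) in H by (field; lra).
    lra.
Qed.
Theorem lemma3p9 (s t : R -> R) (a b : nat -> R) (iota B beta : R)
  (Hs_pos : forall x, 0 < s x) (Ht_pos : forall x, 0 < t x)
  (Hrec : forall k, a (S k) <= (1 - / s (b k)) * a k + / t (b k))
  (* (1) *)
  (Hs_C1 : C1_on_Ioi iota s) (Ht_C1 : C1_on_Ioi iota t)
  (Hs_gt1 : forall x, iota < x -> 1 < s x)
  (Hk_noninc : nonincreasing_on_Ioi iota (kappa s t))
  (Hk_convex : convex_on_Ioi iota (kappa s t))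
  (* (2) *)
  (Hb_lim : is_lim_seq b p_infty)
  (Hb_step : exists N, forall k, (N <= k)%nat -> b (S k) <= b k + B)
  (Hdiv : is_lim_seq (sum_n (fun k => / s (b k))) p_infty)
  (* (3) *)
  (Hbeta : 0 < beta < 1)
  (Hder : forall x, iota < x ->
     B * (Derive s x - kappa s t x * Derive t x) >= -1 + beta) :
  (* limsup_k a_k / kappa(b_k) < +oo *)
  exists M N, forall k, (N <= k)%nat -> a k / kappa s t (b k) <= M.
Proof.
  destruct (proj2 (is_lim_seq_spec b p_infty) Hb_lim iota) as [N1 HN1].
  destruct Hb_step as [N2 HN2].
  set (N0 := max N1 N2).
  set (K := kappa s t).
  assert (HKpos : forall x, 0 < K x).
  { intro x. unfold K, kappa. apply Rdiv_lt_0_compat; auto. }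
  set (M := Rmax (/ beta) (a N0 / K (b N0))).
  assert (HM1 : / beta <= M) by apply Rmax_l.
  assert (HM2 : a N0 / K (b N0) <= M) by apply Rmax_r.
  assert (Hib : 0 < / beta) by (apply Rinv_0_lt_compat; lra).
  assert (HMb : 1 <= M * beta).
  { replace 1 with (/ beta * beta) by (field; lra).
    apply Rmult_le_compat_r; lra. }
  assert (Hinv : forall n, a (N0 + n)%nat <= M * K (b (N0 + n)%nat)).
  { induction n as [|n IH].
    - rewrite Nat.add_0_r. pose proof (HKpos (b N0)).
      replace (a N0) with (a N0 / K (b N0) * K (b N0)) by (field; lra).
      apply Rmult_le_compat_r; lra.
    - set (k := (N0 + n)%nat) in *.
      replace (N0 + S n)%nat with (S k) by (unfold k; lia).
      assert (Hk1 : iota < b k) by (apply HN1; unfold k, N0; lia).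
      assert (Hk2 : iota < b (S k)) by (apply HN1; unfold k, N0; lia).
      assert (Hk3 : b (S k) <= b k + B) by (apply HN2; unfold k, N0; lia).
      pose proof (kappa_step s t iota B beta (b k) (b (S k)) Hs_pos Ht_pos Hs_C1 Ht_C1
        Hk_noninc Hk_convex Hder ltac:(lra) Hk1 Hk2 Hk3) as Hst.
      fold K in Hst.
      pose proof (Hrec k) as Hr.
      assert (HS := Hs_gt1 _ Hk1).
      assert (HT := Ht_pos (b k)).
      assert (HKk := HKpos (b k)).
      assert (HT' : / t (b k) = K (b k) * / s (b k)) by (unfold K, kappa; field; lra).
      replace ((1 - beta) / s (b k)) with ((1 - beta) * / s (b k)) in Hst by (field; lra).
      rewrite HT' in Hr.
      set (u := / s (b k)) in *.
      assert (Hu : 0 < u < 1).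
      { unfold u. split. apply Rinv_0_lt_compat; lra.
        rewrite <- Rinv_1. apply Rinv_lt_contravar; lra. }
      assert (H1 : (1 - u) * a k <= (1 - u) * (M * K (b k)))
        by (apply Rmult_le_compat_l; lra).
      assert (H2 : M * (K (b k) * (1 - (1 - beta) * u)) <= M * K (b (S k)))
        by (apply Rmult_le_compat_l; lra).
      assert (H3 : 0 <= (K (b k) * u) * (M * beta - 1))
        by (apply Rmult_le_pos; [apply Rmult_le_pos|]; lra).
      assert (E1 : (1 - u) * (M * K (b k)) + K (b k) * u
                   = M * (K (b k) * (1 - (1 - beta) * u)) - (K (b k) * u) * (M * beta - 1))
        by ring.
      lra. }
  exists M, N0. intros k Hk.
  replace k with (N0 + (k - N0))%nat by lia.
  pose proof (Hinv (k - N0)%nat) as H.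
  pose proof (HKpos (b (N0 + (k - N0))%nat)).
  fold K.
  apply (Rmult_le_reg_r (K (b (N0 + (k - N0))%nat))); auto.
  unfold Rdiv. rewrite Rmult_assoc, Rinv_l; lra.
Qed.
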